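(* Let $T$ be a continuous Archimedean $t$-norm, let $A$ be a fuzzy number in $\mathbb R$ with modal value $m=\mathbb M A$, and let $(X_n)_{n\ge1}$ be a sequence of $T$-independent fuzzy variables on a possibility space $(\Omega,\Pi)$, each with membership function $A$. Let $\bar A_n=\frac1n(X_1+\dots+X_n)$ and, for odd $n$, $M_n=\mathrm{median}(X_1,\dots,X_n)$ (defined pointwise on $\Omega$). Then $(\bar A_n)_{n\ge1}$ and $(M_{2n+1})_{n\ge0}$ converge to the constant $m$ in distribution, in measure, and almost surely.
   Context: A possibility space $(\Omega,\Pi)$: $\Pi(S)=\sup_{\omega\in S}\pi(\omega)$ ($\sup\emptyset=0$) for a map $\pi:\Omega\to[0,1]$ attaining $1$. A fuzzy variable is a map $X:\Omega\to\mathbb R$; its membership function is $A_X(y)=\Pi(X^{-1}(y))$. A $t$-norm is a commutative, associative map $T:[0,1]^2\to[0,1]$, non-decreasing in each variable, with neutral element $1$; continuous and Archimedean means continuous and for all $x,y\in(0,1)$ some $n$ gives $T(x,\dots,x)<y$ ($n$ arguments). Fuzzy variables $X_1,X_2,\dots$ are $T$-independent if for all distinct indices $i_1,\dots,i_k$ and all $B_1,\dots,B_k\subseteq\mathbb R$, $\Pi(X_{i_1}\in B_1,\dots,X_{i_k}\in B_k)=T(\Pi(X_{i_1}\in B_1),\dots,\Pi(X_{i_k}\in B_k))$. A fuzzy number is a map $A:\mathbb R\to[0,1]$ whose $\alpha$-cuts $\{A\ge\alpha\}$, $\alpha\in(0,1]$, are nonempty compact intervals and with exactly one point $m$ with $A(m)=1$;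 $\mathbb M A=m$. Convergence to a constant $c$: in distribution means $A_{Y_n}^\alpha\to\{c\}$ in the Hausdorff metric for every $\alpha\in(0,1]$; in measure means $\Pi(|Y_n-c|\ge\epsilon)\to0$ for all $\epsilon>0$; almost surely means $\Pi(\{\omega: Y_n(\omega)\not\to c\})=0$. *)

(* Defs.v *)
From Stdlib Require Import Reals Lra List.
Import ListNotations.
Open Scope R_scope.

Record PossSpace := {
  Omega : Type;
  pi : Omega -> R;
  pi_range : forall w, 0 <= pi w <= 1;
  pi_attains_one : exists w, pi w = 1
}.

(* values whose sup is Pi(S); 0 is included so that sup(empty) = 0
   (harmless otherwise since pi >= 0) *)
Definition poss_vals (P : PossSpace) (S : Omega P -> Prop) : R -> Prop :=
  fun y => y = 0 \/ exists w, S w /\ y = pi P w.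

Lemma poss_vals_bound P S : bound (poss_vals P S).
Proof.
  exists 1. intros y [->|[w [_ ->]]]; [lra|]. apply (pi_range P w).
Qed.

Lemma poss_vals_ne P S : exists y, poss_vals P S y.
Proof. exists 0. left. reflexivity. Qed.

Definition Poss (P : PossSpace) (S : Omega P -> Prop) : R :=
  proj1_sig (completeness (poss_vals P S) (poss_vals_bound P S) (poss_vals_ne P S)).

Definition membership (P : PossSpace) (X : Omega P -> R) (y : R) : R :=
  Poss P (fun w => X w = y).

Definition in01 (x : R) : Prop := 0 <= x <= 1.

Definition is_tnorm (T : R -> R -> R) : Prop :=
  (forall x y, in01 x -> in01 y -> in01 (T x y)) /\
  (forall x y, in01 x -> in01 y -> T x y = T y x) /\
  (forall x y z, in01 x -> in01 y -> in01 z -> T x (T y z) = T (T x y) z) /\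
  (forall x x' y, in01 x -> in01 x' -> in01 y -> x <= x' -> T x y <= T x' y) /\
  (forall x, in01 x -> T x 1 = x).

Definition tnorm_continuous (T : R -> R -> R) : Prop :=
  forall x y, in01 x -> in01 y -> forall eps, 0 < eps ->
    exists delta, 0 < delta /\
      forall x' y', in01 x' -> in01 y' -> Rabs (x' - x) < delta ->
        Rabs (y' - y) < delta -> Rabs (T x' y' - T x y) < eps.

Fixpoint Tpow (T : R -> R -> R) (n : nat) (x : R) : R :=
  match n with
  | O => 1
  | S k => T x (Tpow T k x)
  end.

Definition tnorm_archimedean (T : R -> R -> R) : Prop :=
  forall x y, 0 < x < 1 -> 0 < y < 1 -> exists n, Tpow T n x < y.

Definition cont_arch_tnorm (T : R -> R -> R) : Prop :=
  is_tnorm T /\ tnorm_continuous T /\ tnorm_archimedean T.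

(* A finite family of pairs (index i_j, set B_j) with distinct indices:
   Pi(X_{i_1} in B_1, ..., X_{i_k} in B_k) = T(Pi(X_{i_1} in B_1), ..., Pi(X_{i_k} in B_k)). *)
Definition T_independent (P : PossSpace) (T : R -> R -> R)
    (X : nat -> Omega P -> R) : Prop :=
  forall l : list (nat * (R -> Prop)), NoDup (map fst l) ->
    Poss P (fun w => Forall (fun p => snd p (X (fst p) w)) l) =
    fold_right (fun p acc => T (Poss P (fun w => snd p (X (fst p) w))) acc) 1 l.

Definition fuzzy_number (A : R -> R) : Prop :=
  (forall y, in01 (A y)) /\
  (forall alpha, 0 < alpha <= 1 ->
     exists a b, a <= b /\ forall y, (alpha <= A y <-> a <= y <= b)) /\
  (exists! m, A m = 1).

Fixpoint insertR (x : R) (l : list R) : list R :=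
  match l with
  | [] => [x]
  | y :: l' => if Rle_dec x y then x :: y :: l' else y :: insertR x l'
  end.

Fixpoint sortR (l : list R) : list R :=
  match l with
  | [] => []
  | x :: l' => insertR x (sortR l')
  end.

(* median of a list (for odd length 2k+1: the (k+1)-th smallest element) *)
Definition median (l : list R) : R := nth (Nat.div2 (length l)) (sortR l) 0.

(* sample values X_1(w), ..., X_n(w); X is 0-indexed: X_i = X (i-1) *)
Definition sample (P : PossSpace) (X : nat -> Omega P -> R) (n : nat) (w : Omega P)
  : list R := map (fun i => X i w) (seq 0 n).

(* \bar A_{k+1} = (X_1 + ... + X_{k+1}) / (k+1) *)
Definition sample_mean (P : PossSpace) (X : nat -> Omega P -> R) (k : nat)
  (w : Omega P) : R :=
  fold_right Rplus 0 (sample P X (S k) w) / INR (S k).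

(* M_{2k+1} = median(X_1, ..., X_{2k+1}) *)
Definition sample_median (P : PossSpace) (X : nat -> Omega P -> R) (k : nat)
  (w : Omega P) : R :=
  median (sample P X (S (2 * k)) w).

(* alpha-cuts of A_{Y_n} converge to {c} in the Hausdorff metric:
   eventually nonempty and sup_{s in cut} |s - c| -> 0 *)
Definition conv_distribution (P : PossSpace) (Y : nat -> Omega P -> R) (c : R) : Prop :=
  forall alpha, 0 < alpha <= 1 ->
    forall eps, 0 < eps -> exists N, forall n, (N <= n)%nat ->
      (exists s, alpha <= membership P (Y n) s) /\
      (forall s, alpha <= membership P (Y n) s -> Rabs (s - c) <= eps).

Definition conv_measure (P : PossSpace) (Y : nat -> Omega P -> R) (c : R) : Prop :=
  forall eps, 0 < eps ->
    Un_cv (fun n => Poss P (fun w => Rabs (Y n w - c) >= eps)) 0.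

Definition conv_as (P : PossSpace) (Y : nat -> Omega P -> R) (c : R) : Prop :=
  Poss P (fun w => ~ Un_cv (fun n => Y n w) c) = 0.

(* Main.v *)
Require Import Defs.
From Stdlib Require Import Reals Lra Lia List Permutation Sorting Classical ZArith.
Import ListNotations.
Open Scope R_scope.

Lemma nat_above (x : R) : exists N : nat, x < INR N.
Proof.
  destruct (archimed x) as [H1 _].
  destruct (Z_lt_le_dec (up x) 0) as [Hz|Hz].
  - exists 0%nat. simpl. apply IZR_lt in Hz. lra.
  - exists (Z.to_nat (up x)). rewrite INR_IZR_INZ, Z2Nat.id by lia. lra.
Qed.

Section PossL.
End PossL.

Lemma Poss_ge P (Q : Omega P -> Prop) w : Q w -> pi P w <= Poss P Q.
Proof.
  intro Hs. unfold Poss. let c := match goal with |- context [proj1_sig ?t] => t end in destruct c as [s [Hub Hlub]]; simpl.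
  apply Hub. right. exists w. auto.
Qed.

Lemma Poss_nonneg P (Q : Omega P -> Prop) : 0 <= Poss P Q.
Proof.
  unfold Poss. let c := match goal with |- context [proj1_sig ?t] => t end in destruct c as [s [Hub Hlub]]; simpl.
  apply Hub. left. reflexivity.
Qed.

Lemma Poss_le P (Q : Omega P -> Prop) c : 0 <= c -> (forall w, Q w -> pi P w <= c) -> Poss P Q <= c.
Proof.
  intros Hc H. unfold Poss. let c := match goal with |- context [proj1_sig ?t] => t end in destruct c as [s [Hub Hlub]]; simpl.
  apply Hlub. intros y [->|[w [Hw ->]]]; auto.
Qed.

Lemma T_le_r T x y : is_tnorm T -> in01 x -> in01 y -> T x y <= y.
Proof.
  intros [H01 [Hc [Ha [Hm H1]]]] hx hy.
  assert (in01 1) by (unfold in01; lra).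
  rewrite <- (H1 y hy) at 2. rewrite (Hc y 1) by auto.
  apply Hm; auto. unfold in01 in hx; lra.
Qed.

Lemma T_le_l T x y : is_tnorm T -> in01 x -> in01 y -> T x y <= x.
Proof.
  intros HT hx hy. pose proof HT as [H01 [Hc _]].
  rewrite Hc by auto. apply T_le_r; auto.
Qed.

Lemma T_mono2 T x y y' : is_tnorm T -> in01 x -> in01 y -> in01 y' -> y <= y' -> T x y <= T x y'.
Proof.
  intros [H01 [Hc [Ha [Hm H1]]]] hx hy hy' Hle.
  rewrite (Hc x y), (Hc x y') by auto. apply Hm; auto.
Qed.

Lemma T_in01 T x y : is_tnorm T -> in01 x -> in01 y -> in01 (T x y).
Proof. intros [H _] ? ?; auto. Qed.

Lemma Tpow_in01 T n a : is_tnorm T -> in01 a -> in01 (Tpow T n a).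
Proof.
  intros HT ha. induction n; simpl. unfold in01; lra. apply T_in01; auto.
Qed.

Lemma Tpow_anti T a K c : is_tnorm T -> in01 a -> (K <= c)%nat -> Tpow T c a <= Tpow T K a.
Proof.
  intros HT ha Hle. induction Hle. lra.
  simpl. eapply Rle_trans; [|exact IHHle]. apply T_le_r; auto using Tpow_in01.
Qed.

Fixpoint cnt (f : R -> bool) (l : list R) : nat :=
  match l with [] => 0%nat | x :: t => ((if f x then 1 else 0) + cnt f t)%nat end.

Definition far (A : R -> R) (a : R) (x : R) : bool := if Rle_dec (A x) a then true else false.

Definition prodA (T : R -> R -> R) (A : R -> R) (l : list R) : R :=
  fold_right (fun x acc => T (A x) acc) 1 l.

Lemma prodA_in01 T A l : is_tnorm T -> (forall y, in01 (A y)) -> in01 (prodA T A l).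
Proof.
  intros HT HA. induction l; simpl. unfold in01; lra. apply T_in01; auto.
Qed.

Lemma prodA_le_mem T A l x : is_tnorm T -> (forall y, in01 (A y)) -> In x l -> prodA T A l <= A x.
Proof.
  intros HT HA. induction l as [|h t IH]; simpl; [tauto|]. intros [->|Hi].
  - apply T_le_l; auto using prodA_in01.
  - eapply Rle_trans; [apply T_le_r; auto using prodA_in01|]. auto.
Qed.

Lemma prodA_le_Tpow T A a l : is_tnorm T -> (forall y, in01 (A y)) -> in01 a ->
  prodA T A l <= Tpow T (cnt (far A a) l) a.
Proof.
  intros HT HA ha. induction l as [|h t IH]; simpl. lra.
  unfold far at 1. destruct (Rle_dec (A h) a) as [Hl|Hl]; simpl.
  - eapply Rle_trans.
    + pose proof HT as [H01 [Hc [Ha [Hm H1]]]]. apply (Hm (A h) a (prodA T A t)); auto using prodA_in01.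
    + apply T_mono2; auto using prodA_in01, Tpow_in01.
  - eapply Rle_trans; [apply T_le_r; auto using prodA_in01|]. auto.
Qed.

Lemma cnt_perm f l l' : Permutation l l' -> cnt f l = cnt f l'.
Proof.
  induction 1; simpl; auto; try lia; try congruence.
  all: destruct (f x), (f y); lia.
Qed.

Lemma cnt_mono (f g : R -> bool) l : (forall x, g x = true -> f x = true) -> (cnt g l <= cnt f l)%nat.
Proof.
  intro H. induction l as [|h t IH]; simpl. lia.
  destruct (g h) eqn:E. rewrite (H h E). lia. destruct (f h); lia.
Qed.

Lemma left_tail (A : R -> R) (m eps : R) :
  (forall y, in01 (A y)) ->
  (forall beta, 0 < beta <= 1 -> exists a b, a <= b /\ forall y, (beta <= A y <-> a <= y <= b)) ->
  (forall y, A y = 1 -> y = m) -> A m = 1 -> 0 < eps ->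
  exists al, al < 1 /\ forall y, y <= m - eps -> A y <= al.
Proof.
  intros H01 Hcut Hu Hm Heps.
  apply NNPP. intro Hn.
  assert (Hall : forall al, al < 1 -> exists y, y <= m - eps /\ al < A y).
  { intros al Hal. apply NNPP. intro Hne. apply Hn. exists al. split; auto.
    intros y Hy. apply Rnot_lt_le. intro Hlt. apply Hne. exists y. auto. }
  set (E := fun y => y <= m - eps /\ 1/2 <= A y).
  assert (Hb : bound E) by (exists (m - eps); intros y [Hy _]; auto).
  assert (Hne : exists y, E y).
  { destruct (Hall (1/2)) as [y [Hy1 Hy2]]. lra. exists y. split; lra. }
  destruct (completeness E Hb Hne) as [s [Hub Hlub]].
  assert (Hs : s <= m - eps) by (apply Hlub; intros y [Hy _]; auto).
  assert (Hbeta : forall beta, 1/2 <= beta < 1 -> beta <= A s).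
  { intros beta Hbt. destruct (Hcut beta) as [a [b [Hab Hc]]]. lra.
    destruct (Hall beta) as [y [Hy1 Hy2]]. lra.
    assert (HyE : E y) by (split; lra).
    assert (a <= y <= b) by (apply Hc; lra).
    assert (a <= m <= b) by (apply Hc; lra).
    assert (y <= s) by (apply Hub; auto).
    apply Hc. lra. }
  assert (A s = 1).
  { destruct (H01 s). destruct (Rlt_or_le (A s) 1) as [Hl|Hl]; [|lra].
    exfalso. set (bt := Rmax (1/2) ((A s + 1)/2)).
    assert (bt <= A s). apply Hbeta. unfold bt; split. apply Rmax_l.
    apply Rmax_lub_lt; lra.
    assert ((A s + 1)/2 <= bt) by apply Rmax_r. lra. }
  apply Hu in H. lra.
Qed.

Lemma near_mode (A : R -> R) (m eps : R) :
  fuzzy_number A -> A m = 1 -> 0 < eps ->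
  exists al, 0 < al < 1 /\ forall y, al < A y -> Rabs (y - m) < eps.
Proof.
  intros [H01 [Hcut [m0 [Hm0 Hu0]]]] Hm Heps.
  assert (Hu : forall y, A y = 1 -> y = m).
  { intros y Hy. rewrite <- (Hu0 y Hy). apply Hu0. auto. }
  destruct (left_tail A m eps H01 Hcut Hu Hm Heps) as [a1 [Ha1 H1]].
  destruct (left_tail (fun y => A (- y)) (- m) eps) as [a2 [Ha2 H2]]; auto.
  - intros beta Hb. destruct (Hcut beta Hb) as [a [b [Hab Hc]]].
    exists (- b), (- a). split. lra. intro y. rewrite Hc. lra.
  - intros y Hy. apply Hu in Hy. lra.
  - rewrite Ropp_involutive. auto.
  - exists (Rmax (1/2) (Rmax a1 a2)). split.
    + split. apply Rlt_le_trans with (1/2). lra. apply Rmax_l.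
      apply Rmax_lub_lt. lra. apply Rmax_lub_lt; lra.
    + intros y Hy. assert (a1 <= Rmax (1/2) (Rmax a1 a2)).
      { eapply Rle_trans; [apply Rmax_l|apply Rmax_r]. }
      assert (a2 <= Rmax (1/2) (Rmax a1 a2)).
      { eapply Rle_trans; [apply Rmax_r|apply Rmax_r]. }
      apply Rabs_def1.
      * apply Rnot_le_lt. intro Hc. specialize (H2 (- y)). rewrite Ropp_involutive in H2.
        assert (A y <= a2) by (apply H2; lra). lra.
      * apply Rnot_le_lt. intro Hc. assert (A y <= a1) by (apply H1; lra). lra.
Qed.

Lemma insertR_perm x l : Permutation (x :: l) (insertR x l).
Proof.
  induction l as [|y t IH]; simpl. auto.
  destruct (Rle_dec x y). auto.
  eapply perm_trans. apply perm_swap. constructor. auto.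
Qed.

Lemma sortR_perm l : Permutation l (sortR l).
Proof.
  induction l as [|x t IH]; simpl. auto.
  eapply perm_trans; [|apply insertR_perm]. constructor. auto.
Qed.

Lemma insertR_sorted x l : StronglySorted Rle l -> StronglySorted Rle (insertR x l).
Proof.
  induction l as [|y t IH]; simpl; intro Hs.
  - constructor; auto.
  - destruct (Rle_dec x y) as [Hxy|Hxy].
    + constructor; auto. constructor; auto.
      apply StronglySorted_inv in Hs. destruct Hs as [_ Hf].
      rewrite Forall_forall in *. intros z Hz. specialize (Hf z Hz). lra.
    + apply StronglySorted_inv in Hs. destruct Hs as [Hs Hf].
      constructor; auto.
      apply (Permutation_Forall (insertR_perm x t)). constructor; auto. lra.
Qed.

Lemma sortR_sorted l : StronglySorted Rle (sortR l).
Proof. induction l; simpl. constructor. apply insertR_sorted; auto. Qed.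

Definition geb (c : R) (x : R) : bool := if Rle_dec c x then true else false.
Definition leb' (c : R) (x : R) : bool := if Rle_dec x c then true else false.

Lemma sorted_count_ge s k c : StronglySorted Rle s -> (k < length s)%nat -> c <= nth k s 0 ->
  (length s - k <= cnt (geb c) s)%nat.
Proof.
  revert k. induction s as [|h t IH]; intros k Hs Hk Hc; simpl in *. lia.
  apply StronglySorted_inv in Hs. destruct Hs as [Hs Hf].
  destruct k as [|k].
  - unfold geb at 1. destruct (Rle_dec c h); [|lra].
    assert (length t <= cnt (geb c) t)%nat.
    { clear IH Hk. induction t as [|u t' IHt]; simpl. lia.
      apply Forall_inv_tail in Hf as Hf'. inversion Hf; subst.
      apply StronglySorted_inv in Hs. destruct Hs.
      unfold geb at 1. destruct (Rle_dec c u); [|lra]. specialize (IHt H Hf'). lia. }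
    lia.
  - assert (length t - k <= cnt (geb c) t)%nat by (apply IH; auto; lia).
    destruct (geb c h); lia.
Qed.

Lemma sorted_count_le s k c : StronglySorted Rle s -> (k < length s)%nat -> nth k s 0 <= c ->
  (S k <= cnt (leb' c) s)%nat.
Proof.
  revert k. induction s as [|h t IH]; intros k Hs Hk Hc; simpl in *. lia.
  apply StronglySorted_inv in Hs. destruct Hs as [Hs Hf].
  destruct k as [|k].
  - unfold leb' at 1. destruct (Rle_dec h c); [|lra]. lia.
  - assert (S k <= cnt (leb' c) t)%nat by (apply IH; auto; lia).
    assert (h <= c).
    { rewrite Forall_forall in Hf. assert (In (nth k t 0) t) by (apply nth_In; lia).
      specialize (Hf _ H0). lra. }
    unfold leb' at 1. destruct (Rle_dec h c); [|lra]. lia.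
Qed.

Lemma median_near (l : list R) k (fa : R -> bool) m eps : 0 < eps ->
  length l = S (2 * k) -> (cnt fa l <= k)%nat ->
  (forall x, eps <= Rabs (x - m) -> fa x = true) ->
  Rabs (median l - m) < eps.
Proof.
  intros Heps Hl Hc Hf. unfold median. rewrite Hl, Nat.div2_succ_double.
  set (s := sortR l).
  assert (Hp : Permutation l s) by apply sortR_perm.
  assert (Hs : StronglySorted Rle s) by apply sortR_sorted.
  assert (Hls : length s = S (2 * k)) by (rewrite <- (Permutation_length Hp); auto).
  apply Rnot_le_lt. intro Hn.
  destruct (Rle_or_lt 0 (nth k s 0 - m)) as [Hpos|Hneg].
  - rewrite Rabs_right in Hn by lra.
    assert (H1 := sorted_count_ge s k (m + eps) Hs ltac:(lia) ltac:(lra)).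
    assert (H2 : (cnt (geb (m + eps)) s <= cnt fa s)%nat).
    { apply cnt_mono. intros x Hx. unfold geb in Hx. destruct (Rle_dec (m+eps) x); [|discriminate].
      apply Hf. rewrite Rabs_right; lra. }
    rewrite <- (cnt_perm fa _ _ Hp) in H2. lia.
  - rewrite Rabs_left in Hn by lra.
    assert (H1 := sorted_count_le s k (m - eps) Hs ltac:(lia) ltac:(lra)).
    assert (H2 : (cnt (leb' (m - eps)) s <= cnt fa s)%nat).
    { apply cnt_mono. intros x Hx. unfold leb' in Hx. destruct (Rle_dec x (m-eps)); [|discriminate].
      apply Hf. rewrite Rabs_left1; lra. }
    rewrite <- (cnt_perm fa _ _ Hp) in H2. lia.
Qed.

Lemma sum_dev (l : list R) (fa : R -> bool) m C e : 0 <= e ->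
  (forall x, In x l -> Rabs (x - m) <= C) ->
  (forall x, In x l -> fa x = false -> Rabs (x - m) <= e) ->
  Rabs (fold_right Rplus 0 l - INR (length l) * m) <= INR (cnt fa l) * C + INR (length l) * e.
Proof.
  intro He. induction l as [|h t IH]; intros H1 H2; cbn [fold_right length cnt].
  - rewrite Rmult_0_l, Rminus_0_r, Rabs_R0. simpl; lra.
  - assert (IH' := IH (fun x Hx => H1 x (or_intror Hx)) (fun x Hx => H2 x (or_intror Hx))).
    rewrite S_INR.
    replace (h + fold_right Rplus 0 t - (INR (length t) + 1) * m)
      with ((h - m) + (fold_right Rplus 0 t - INR (length t) * m)) by ring.
    eapply Rle_trans; [apply Rabs_triang|].
    assert (Hh := H1 h (or_introl eq_refl)).
    destruct (fa h) eqn:E.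
    + rewrite plus_INR. change (INR 1) with 1. assert (0 <= INR (length t)) by apply pos_INR.
      assert (0 <= INR (cnt fa t)) by apply pos_INR. nra.
    + assert (Hh2 := H2 h (or_introl eq_refl) E). change (0 + cnt fa t)%nat with (cnt fa t). lra.
Qed.

Lemma pi_le_prod T A (P : PossSpace) (X : nat -> Omega P -> R)
  (Hind : T_independent P T X) (Hmem : forall i y, membership P (X i) y = A y) n w :
  pi P w <= prodA T A (sample P X n w).
Proof.
  set (l := map (fun i => (i, fun y => y = X i w)) (seq 0 n)).
  assert (Hnd : NoDup (map fst l)).
  { unfold l. rewrite map_map. simpl. rewrite map_id. apply seq_NoDup. }
  specialize (Hind l Hnd).
  assert (Hfold : forall L : list nat,
    fold_right (fun p acc => T (Poss P (fun w' => snd p (X (fst p) w'))) acc) 1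
      (map (fun i => (i, fun y => y = X i w)) L) =
    prodA T A (map (fun i => X i w) L)).
  { induction L as [|i L IH]; simpl. reflexivity. rewrite IH. f_equal.
    change (Poss P (fun w' => X i w' = X i w)) with (membership P (X i) (X i w)).
    apply Hmem. }
  unfold l in Hind. rewrite Hfold in Hind. unfold sample. rewrite <- Hind.
  apply Poss_ge. apply Forall_forall. intros p Hp. apply in_map_iff in Hp.
  destruct Hp as [i [<- _]]. simpl. reflexivity.
Qed.

Lemma count_bound T A (P : PossSpace) (X : nat -> Omega P -> R) m
  (HT : cont_arch_tnorm T) (HA : fuzzy_number A) (Hm : A m = 1)
  (Hind : T_independent P T X) (Hmem : forall i y, membership P (X i) y = A y)
  eps delta : 0 < eps -> 0 < delta < 1 ->
  exists al K, 0 < al < 1 /\ (forall y, al < A y -> Rabs (y - m) < eps) /\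
    forall n w, delta <= pi P w -> (cnt (far A al) (sample P X n w) < K)%nat.
Proof.
  intros He Hd. destruct (near_mode A m eps HA Hm He) as [al [Hal Hnear]].
  destruct HT as [HT [_ Harch]].
  destruct (Harch al delta Hal Hd) as [K HK].
  exists al, K. split; auto. split; auto.
  intros n w Hw. destruct (Nat.lt_ge_cases (cnt (far A al) (sample P X n w)) K) as [Hlt|Hge]; [exact Hlt|exfalso].
  pose proof (pi_le_prod T A P X Hind Hmem n w) as H1.
  assert (Ha01 : in01 al) by (unfold in01; lra).
  pose proof (prodA_le_Tpow T A al (sample P X n w) HT (proj1 HA) Ha01) as H2.
  pose proof (Tpow_anti T al K _ HT Ha01 Hge) as H3. lra.
Qed.

Lemma cut_bound T A (P : PossSpace) (X : nat -> Omega P -> R) m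
  (HT : cont_arch_tnorm T) (HA : fuzzy_number A) (Hm : A m = 1)
  (Hind : T_independent P T X) (Hmem : forall i y, membership P (X i) y = A y)
  delta : 0 < delta < 1 ->
  exists C, 0 <= C /\ forall n w x, delta <= pi P w -> In x (sample P X n w) -> Rabs (x - m) <= C.
Proof.
  intros Hd. pose proof HA as [H01 [Hcut _]].
  destruct (Hcut delta ltac:(lra)) as [a [b [Hab Hc]]].
  assert (a <= m <= b) by (apply Hc; lra).
  exists (b - a). split. lra. intros n w x Hw Hx.
  pose proof (pi_le_prod T A P X Hind Hmem n w).
  pose proof (prodA_le_mem T A _ x (proj1 HT) H01 Hx).
  assert (a <= x <= b) by (apply Hc; lra).
  apply Rabs_le. lra.
Qed.

Lemma len_sample P X n w : length (sample P X n w) = n.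
Proof. unfold sample. rewrite length_map, length_seq. reflexivity. Qed.

Lemma far_false A al x : far A al x = false -> al < A x.
Proof. unfold far. destruct (Rle_dec (A x) al); [discriminate|lra]. Qed.

Lemma U_mean T A (P : PossSpace) (X : nat -> Omega P -> R) m
  (HT : cont_arch_tnorm T) (HA : fuzzy_number A) (Hm : A m = 1)
  (Hind : T_independent P T X) (Hmem : forall i y, membership P (X i) y = A y) :
  forall eps, 0 < eps -> forall delta, 0 < delta < 1 -> exists N, forall n w,
    (N <= n)%nat -> delta <= pi P w -> Rabs (sample_mean P X n w - m) < eps.
Proof.
  intros eps He delta Hd.
  destruct (count_bound T A P X m HT HA Hm Hind Hmem (eps/2) delta ltac:(lra) Hd)
    as [al [K [Hal [Hnear Hcnt]]]].
  destruct (cut_bound T A P X m HT HA Hm Hind Hmem delta Hd) as [C [HC Hbd]].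
  set (D := INR K * C).
  assert (HD : 0 <= D) by (unfold D; apply Rmult_le_pos; auto using pos_INR).
  destruct (nat_above (2 * D / eps)) as [N HN].
  exists N. intros n w Hn Hw.
  set (xs := sample P X (S n) w).
  assert (Hs := sum_dev xs (far A al) m C (eps/2) ltac:(lra)
     (fun x Hx => Hbd (S n) w x Hw Hx)
     (fun x Hx Hf => Rlt_le _ _ (Hnear x (far_false A al x Hf)))).
  unfold xs in Hs. rewrite len_sample in Hs.
  assert (Hc := Hcnt (S n) w Hw).
  assert (Hci : INR (cnt (far A al) (sample P X (S n) w)) <= INR K) by (apply le_INR; lia).
  assert (HL : INR N <= INR (S n)) by (apply le_INR; lia).
  assert (HL0 : 0 < INR (S n)) by (apply lt_0_INR; lia).
  set (L := INR (S n)) in *.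
  set (sm := fold_right Rplus 0 (sample P X (S n) w)) in *.
  assert (HDN : D < eps / 2 * INR N).
  { assert (2 * D / eps * eps = 2 * D) by (field; lra). nra. }
  assert (Hd1 : Rabs (sm - L * m) < eps * L).
  { assert (INR (cnt (far A al) (sample P X (S n) w)) * C <= D) by (unfold D; nra). nra. }
  unfold sample_mean. fold sm. fold L.
  replace (sm / L - m) with ((sm - L * m) * / L) by (field; lra).
  rewrite Rabs_mult, (Rabs_right (/ L)) by (left; apply Rinv_0_lt_compat; lra).
  assert (L * / L = 1) by (field; lra).
  assert (0 < / L) by (apply Rinv_0_lt_compat; lra). nra.
Qed.

Lemma U_median T A (P : PossSpace) (X : nat -> Omega P -> R) m
  (HT : cont_arch_tnorm T) (HA : fuzzy_number A) (Hm : A m = 1)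
  (Hind : T_independent P T X) (Hmem : forall i y, membership P (X i) y = A y) :
  forall eps, 0 < eps -> forall delta, 0 < delta < 1 -> exists N, forall n w,
    (N <= n)%nat -> delta <= pi P w -> Rabs (sample_median P X n w - m) < eps.
Proof.
  intros eps He delta Hd.
  destruct (count_bound T A P X m HT HA Hm Hind Hmem eps delta He Hd)
    as [al [K [Hal [Hnear Hcnt]]]].
  exists K. intros n w Hn Hw. unfold sample_median.
  apply (median_near _ n (far A al) m eps He).
  - apply len_sample.
  - specialize (Hcnt (S (2 * n)) w Hw). lia.
  - intros x Hx. destruct (far A al x) eqn:E; auto.
    apply far_false in E. apply Hnear in E. lra.
Qed.

Lemma conv_all (P : PossSpace) (Y : nat -> Omega P -> R) m
  (U : forall eps, 0 < eps -> forall delta, 0 < delta < 1 -> exists N, forall n w,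
    (N <= n)%nat -> delta <= pi P w -> Rabs (Y n w - m) < eps) :
  conv_distribution P Y m /\ conv_measure P Y m /\ conv_as P Y m.
Proof.
  destruct (pi_attains_one P) as [w0 Hw0].
  split; [|split].
  - intros al Hal eps He. destruct (U eps He (al/2) ltac:(lra)) as [N HN].
    exists N. intros n Hn. split.
    + exists (Y n w0). unfold membership.
      assert (pi P w0 <= Poss P (fun w => Y n w = Y n w0)) by (apply Poss_ge; auto). lra.
    + intros s Hs. apply Rnot_lt_le. intro Hgt.
      assert (Poss P (fun w => Y n w = s) <= al / 2).
      { apply Poss_le. lra. intros w Hw. apply Rnot_lt_le. intro Hlt.
        assert (Rabs (Y n w - m) < eps) by (apply HN; auto; lra). subst s. lra. }
      unfold membership in Hs. lra.
  - intros eps He e He'. set (dl := Rmin (e/2) (1/2)).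
    assert (Hdl : 0 < dl < 1) by (unfold dl; split; [apply Rmin_pos|apply Rle_lt_trans with (1/2); [apply Rmin_r|]]; lra).
    assert (dl <= e/2) by apply Rmin_l.
    destruct (U eps He dl Hdl) as [N HN]. exists N. intros n Hn. unfold R_dist.
    rewrite Rminus_0_r.
    assert (Hp : Poss P (fun w => Rabs (Y n w - m) >= eps) <= dl).
    { apply Poss_le. lra. intros w Hw. apply Rnot_lt_le. intro Hlt.
      assert (Rabs (Y n w - m) < eps) by (apply HN; auto; lra). lra. }
    pose proof (Poss_nonneg P (fun w => Rabs (Y n w - m) >= eps)).
    rewrite Rabs_right by lra. lra.
  - apply Rle_antisym; [|apply Poss_nonneg].
    apply Poss_le. lra. intros w Hw. apply Rnot_lt_le. intro Hp.
    apply Hw. intros e He. pose proof (pi_range P w).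
    destruct (U e He (pi P w / 2) ltac:(lra)) as [N HN]. exists N. intros n Hn.
    unfold R_dist. apply HN. lia. lra.
Qed.

Theorem mainTheorem10
  (T : R -> R -> R) (A : R -> R) (m : R)
  (P : PossSpace) (X : nat -> Omega P -> R)
  (HT : cont_arch_tnorm T)
  (HA : fuzzy_number A)
  (Hm : A m = 1)
  (Hind : T_independent P T X)
  (Hmem : forall i y, membership P (X i) y = A y) :
  (conv_distribution P (sample_mean P X) m /\
   conv_measure P (sample_mean P X) m /\
   conv_as P (sample_mean P X) m) /\
  (conv_distribution P (sample_median P X) m /\
   conv_measure P (sample_median P X) m /\
   conv_as P (sample_median P X) m).
Proof.
  split; apply conv_all.
  - apply (U_mean T A P X m HT HA Hm Hind Hmem).
  - apply (U_median T A P X m HT HA Hm Hind Hmem).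
Qed.
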